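(* For a ring $R$, the following conditions are equivalent: (1) $R$ is strongly $n$-torsion clean for some $n\in\mathbb{N}$; (2) $R$ is strongly clean and the unit group $U(R)$ has finite exponent.
   Context: All rings are associative with identity. A ring is strongly clean if every element is a sum $e+u$ of an idempotent $e$ and a unit $u$ with $eu=ue$. A ring $R$ is strongly $n$-torsion clean if every $r\in R$ can be written $r=e+u$ with $e^2=e$, $u\in U(R)$, $u^n=1$ and $eu=ue$, and $n$ is the smallest natural number with this property. *)

(* Defs.v *)
From HB Require Import structures.
From mathcomp Require Import all_boot all_order all_algebra.
Set Implicit Arguments. Unset Strict Implicit. Unset Printing Implicit Defensive.
Import GRing.Theory.
Local Open Scope ring_scope.

Definition strongly_clean (R : unitRingType) : Prop :=
  forall r : R, exists e u : R,
    [/\ e * e = e, u \is a GRing.unit, e * u = u * e & r = e + u].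

Definition strongly_torsion_clean_with (R : unitRingType) (n : nat) : Prop :=
  forall r : R, exists e u : R,
    [/\ e * e = e, u \is a GRing.unit, u ^+ n = 1, e * u = u * e & r = e + u].

Definition strongly_n_torsion_clean (R : unitRingType) (n : nat) : Prop :=
  [/\ (0 < n)%N, strongly_torsion_clean_with R n &
      forall m : nat, (0 < m)%N -> strongly_torsion_clean_with R m -> (n <= m)%N].

Definition units_finite_exponent (R : unitRingType) : Prop :=
  exists k : nat, (0 < k)%N /\ forall u : R, u \is a GRing.unit -> u ^+ k = 1.

(* Main.v *)
Require Import Defs.
From mathcomp Require Import all_boot all_order all_algebra.
From Stdlib Require Import Classical.
From mathcomp Require Import zify.
Import GRing.Theory.
Local Open Scope ring_scope.

Lemma idem_exp {R : pzRingType} {e : R} {n : nat} : e * e = e -> (0 < n)%N -> e ^+ n = e.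
Proof.
move=> ee; elim: n => // [[|n]] IH _; first by rewrite expr1.
by rewrite exprS IH.
Qed.

Lemma step1 (R : pzRingType) n (a e v : R) : (0 < n)%N -> e * e = e ->
  e * v = v * e -> v ^+ n = 1 -> a = e + v ->
  (a ^+ n - 1) * ((a - 1) ^+ n - 1) = 0.
Proof.
move=> n0 ee ev vn ->.
have ff : (1 - e) * (1 - e) = 1 - e.
  by rewrite mulrBr mulr1 mulrBl mul1r ee subrr subr0.
have cf : GRing.comm (1 - e) v by rewrite /GRing.comm mulrBl mulrBr mul1r mulr1 ev.
have ce : GRing.comm e (e + v) by rewrite /GRing.comm mulrDl mulrDr ev.
have H1 : (1 - e) * ((e + v) ^+ n - 1) = 0.
  rewrite mulrBr mulr1.
  have -> : (1 - e) * (e + v) ^+ n = ((1 - e) * (e + v)) ^+ n.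
    rewrite exprMn_comm ?(idem_exp ff n0) //.
    by rewrite /GRing.comm mulrBl mulrBr mul1r mulr1 ce.
  have -> : (1 - e) * (e + v) = (1 - e) * v.
    by rewrite mulrDr mulrBl mul1r ee subrr add0r.
  by rewrite exprMn_comm // ?(idem_exp ff n0) ?(idem_exp ee n0) // vn mulr1 subrr.
have H2 : e * ((e + v - 1) ^+ n - 1) = 0.
  rewrite mulrBr mulr1.
  have -> : e * (e + v - 1) ^+ n = (e * (e + v - 1)) ^+ n.
    rewrite exprMn_comm ?(idem_exp ee n0) //.
    by apply: commrB; [apply: ce | apply: commr1].
  have -> : e * (e + v - 1) = e * v by rewrite mulrBr mulrDr ee mulr1 (addrC e) addrK.
  by rewrite exprMn_comm // ?(idem_exp ff n0) ?(idem_exp ee n0) // vn mulr1 subrr.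
have -> : (e + v) ^+ n - 1 = e * ((e + v) ^+ n - 1).
  by rewrite -[in RHS](addr0 (e * _)) -H1 -mulrDl [e + (1 - e)]addrC subrK mul1r.
have cX : GRing.comm e ((e + v) ^+ n - 1).
  by apply: commrB; [apply: commrX | apply: commr1].
by rewrite cX -mulrA H2 mulr0.
Qed.
Lemma poly_rel (R : unitRingType) n (u : R) : (0 < n)%N ->
  (u ^+ n - 1) * ((u - 1) ^+ n - 1) = 0 ->
  exists z : nat -> int, u ^+ (n + n) = \sum_(i < n + n) (z i)%:~R * u ^+ i.
Proof.
move=> n0 H.
pose A : {poly int} := 'X^n - 1.
pose B : {poly int} := ('X - 1) ^+ n - 1.
have sA : size A = n.+1.
  by have := size_XnsubC (1 : int) n0; rewrite polyC1.
have sE : size (('X - 1) ^+ n : {poly int}) = n.+1.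
  by have := size_exp_XsubC n (1 : int); rewrite polyC1.
have mE : ('X - 1) ^+ n \is @monic int.
  by have := monic_exp n (monicXsubC (1 : int)); rewrite polyC1.
have sB : size B = n.+1.
  by rewrite /B size_polyDl ?sE // size_polyN size_poly1 ltnS.
have mB : B \is monic.
  by rewrite monicE /B lead_coefDl ?size_polyN ?size_poly1 ?sE ?ltnS // -monicE.
have A0 : A != 0 by rewrite -size_poly_eq0 sA.
have sP : size (A * B) = (n + n).+1.
  by rewrite size_Mmonic // sA sB addSn addnS.
have mP : A * B \is monic.
  by rewrite monicMr // monic_Xn_sub_1.
have cP : (A * B)`_(n + n) = 1.
  by move: mP; rewrite monicE lead_coefE sP => /eqP.
pose PR := map_poly (intr : int -> R) (A * B).
have ePR : PR.[u] = 0.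
  have cm : forall q : {poly int}, comm_poly (map_poly (intr : int -> R) q) u.
    by move=> q; apply: comm_coef_poly => i; rewrite coef_map /= mulrzl mulrzr.
  rewrite /PR rmorphM /= hornerM_comm ?cm //.
  rewrite /A /B !raddfB /= map_polyXn rmorphXn /= raddfB /= map_polyX !rmorph1.
  rewrite !hornerE_comm !horner_exp_comm ?comm_polyX //.
  - by rewrite -!polyC1 !hornerE_comm.
  - by rewrite /comm_poly -!polyC1 !hornerE_comm mulrBr mulrBl mulr1 mul1r.



  exact: comm_polyX.
have sPR : (size PR <= (n + n).+1)%N.
  by rewrite /PR size_map_poly_id0 ?sP // lead_coefE sP /= cP rmorph1 oner_neq0.
move: ePR; rewrite (horner_coef_wide _ sPR) big_ord_recr /= coef_map /= cP rmorph1 mul1r.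
move/eqP; rewrite addr_eq0 => /eqP E.
exists (fun i => - (A * B)`_i); rewrite -[u ^+ _]opprK -E -sumrN; apply: eq_bigr => i _.
by rewrite /PR coef_map /= intrN mulNr.
Qed.
Definition natrep (N : nat) (z : int) : nat :=
  match z with Posz k => k | Negz k => (k.+1 * N.-1)%N end.

Lemma natrepE (R : pzRingType) N (z : int) : (0 < N)%N -> N%:R = 0 :> R ->
  (natrep N z)%:R = z%:~R :> R.
Proof.
move=> N0 HN; case: z => k //=.
have HN1 : (N.-1)%:R = - 1 :> R.
  by apply/eqP; rewrite -subr_eq0 opprK natr1 prednK // HN.
by rewrite NegzE intrN natrM HN1 mulrN1.
Qed.

Definition span {R : pzRingType} (u : R) (d : nat) (r : R) :=
  exists c : nat -> nat, r = \sum_(i < d) (c i)%:R * u ^+ i.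

Lemma span_add (R : pzRingType) (u : R) d r s :
  span u d r -> span u d s -> span u d (r + s).
Proof.
move=> [c ->] [c' ->]; exists (fun i => c i + c' i)%N.
by rewrite -big_split; apply: eq_bigr => i _; rewrite natrD mulrDl.
Qed.

Lemma span_nat (R : pzRingType) (u : R) d k r :
  span u d r -> span u d (k%:R * r).
Proof.
move=> [c ->]; exists (fun i => k * c i)%N.
by rewrite mulr_sumr; apply: eq_bigr => i _; rewrite natrM mulrA.
Qed.

Lemma span_mulu (R : pzRingType) (u : R) d r : (0 < d)%N ->
  span u d (u ^+ d) -> span u d r -> span u d (r * u).
Proof.
case: d => // d _ hd [c ->].
rewrite mulr_suml big_ord_recr /=.
apply: span_add; last by rewrite -mulrA -exprSr; apply: span_nat.
exists (fun i => if i is j.+1 then c j else 0%N).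
rewrite big_ord_recl /= mul0r add0r; apply: eq_bigr => i _.
by rewrite -mulrA -exprSr.
Qed.

Lemma span_exp (R : pzRingType) (u : R) d k : (0 < d)%N ->
  span u d (u ^+ d) -> span u d (u ^+ k).
Proof.
move=> d0 hd; elim: k => [|k IH]; last by rewrite exprSr; apply: span_mulu.
case: d d0 hd => // d _ _.
exists (fun i => (i == 0)%N : nat).
rewrite big_ord_recl /= mul1r expr0 big1 ?addr0 // => i _.
by rewrite mul0r.
Qed.

Lemma exp_cancel (R : unitRingType) (u : R) i j : u \is a GRing.unit ->
  (i < j)%N -> u ^+ i = u ^+ j -> u ^+ (j - i) = 1.
Proof.
move=> uU ij e; apply: (mulrI (unitrX i uU)).
by rewrite mulr1 -exprD subnKC ?(ltnW ij) // e.
Qed.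

Lemma exp_fact (R : unitRingType) (u : R) m M : (0 < m <= M)%N ->
  u ^+ m = 1 -> u ^+ M`! = 1.
Proof.
by move=> hm um; rewrite -(divnK (dvdn_fact hm)) mulnC exprM um expr1n.
Qed.

Local Notation FT d N := {ffun 'I_d -> 'I_N}.

Lemma exp_bound (R : unitRingType) d N : (0 < N)%N -> N%:R = 0 :> R ->
  (0 < d)%N -> forall u : R, u \is a GRing.unit -> span u d (u ^+ d) ->
  u ^+ (#|{ffun 'I_d -> 'I_N}|)`! = 1.
Proof.
move=> N0 HN d0 u uU hd.
pose g (c : FT d N) : R := \sum_(i < d) (c i : nat)%:R * u ^+ i.
have hg : forall k, exists c : FT d N, g c = u ^+ k.
  move=> k; have [c Hc] := @span_exp _ u d k d0 hd.
  exists [ffun i : 'I_d => Ordinal (ltn_pmod (c i) N0)].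
  rewrite Hc /g; apply: eq_bigr => i _; rewrite ffunE /=.
  by rewrite [in RHS](divn_eq (c i) N) natrD natrM HN mulr0 add0r.
pose c0 : FT d N := [ffun => Ordinal N0].
pose h (k : 'I_(#|FT d N|.+1)) : FT d N := odflt c0 [pick c | g c == u ^+ k].
have gh : forall k, g (h k) = u ^+ k.
  move=> k; rewrite /h; case: pickP => [c /eqP // | H0].
  by have [c Hc] := hg k; move: (H0 c); rewrite Hc eqxx.
have [i [j [nij hij]]] : exists i j : 'I_(#|FT d N|.+1), i != j /\ h i = h j.
  apply: NNPP => H0.
  have inj : injective h.
    move=> i j hij; case: (eqVneq i j) => // nij; exfalso; apply: H0; by exists i, j.
  by move: (leq_card h inj); rewrite card_ord ltnn.
have uij : u ^+ i = u ^+ j by rewrite -!gh hij.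
have hi := ltn_ord i; have hj := ltn_ord j.
case: (ltngtP i j) => [lt | lt | eq]; last by move: nij; rewrite (ord_inj eq) eqxx.
- apply: (@exp_fact _ u (j - i)); first by apply/andP; split; lia.
  exact: exp_cancel.
- apply: (@exp_fact _ u (i - j)); first by apply/andP; split; lia.
  exact: exp_cancel.
Qed.

Lemma min_ex (P : nat -> Prop) m : P m ->
  exists n, P n /\ forall k, P k -> (n <= k)%N.
Proof.
elim/ltn_ind: m => m IH Pm.
case: (classic (exists k, (k < m)%N /\ P k)) => [[k [lt Pk]]|H].
  exact: IH k lt Pk.
exists m; split => // k Pk; rewrite leqNgt; apply/negP => lt; apply: H.
by exists k.
Qed.

Theorem theorem2p14 (R : unitRingType) :
  (exists n : nat, strongly_n_torsion_clean R n) <->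
  (strongly_clean R /\ units_finite_exponent R).
Proof.
split.
  move=> [n [n0 Htc Hmin]]; split.
    by move=> r; have [e [u [? ? ? ? ?]]] := Htc r; exists e, u.
  pose N := ((3 ^ n - 1) * (2 ^ n - 1))%N.
  have N0 : (0 < N)%N.
    rewrite muln_gt0 !subn_gt0.
    have h3 : (3 ^ 0 < 3 ^ n)%N by rewrite ltn_exp2l.
    have h2 : (2 ^ 0 < 2 ^ n)%N by rewrite ltn_exp2l.
    by rewrite expn0 in h2 h3; rewrite h2 h3.
  have HN : N%:R = 0 :> R.
    have [e [v [ee vU vn ev E]]] := Htc (3%:R : R).
    have := @step1 _ _ _ _ _ n0 ee ev vn E.
    have -> : (3%:R - 1 : R) = 2%:R by rewrite -[3%:R](natr1 2) addrK.
    have h : forall m : nat, (0 < m)%N -> (m%:R - 1 : R) = (m - 1)%:R.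
      by move=> m m0; rewrite natrB.
    by rewrite -!natrX !h ?expn_gt0 // -natrM.
  exists (#|{ffun 'I_(n + n) -> 'I_N}|)`!; split; first exact: fact_gt0.
  move=> u uU.
  apply: exp_bound => //; first by rewrite addn_gt0 n0.
  have [e [v [ee vU vn ev E]]] := Htc u.
  have [z Hz] := @poly_rel _ _ _ n0 (@step1 _ _ _ _ _ n0 ee ev vn E).
  exists (fun i => natrep N (z i)); rewrite Hz; apply: eq_bigr => i _.
  by rewrite natrepE.
move=> [sc [k [k0 hk]]].
have tk : strongly_torsion_clean_with R k.
  move=> r; have [e [u [? uU ? ?]]] := sc r; exists e, u; split => //; exact: hk.
have [n [[n0 tn] Hmin]] :=
  @min_ex (fun m => (0 < m)%N /\ strongly_torsion_clean_with R m) k (conj k0 tk).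
exists n; split => // m m0 tm; exact: Hmin m (conj m0 tm).
Qed.
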